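(* Let $n\ge1$ and let $\mathcal{G}=(\mathcal{V},\mathcal{E})$ be the multigraph with vertex set $\mathcal{V}=\{0,\ldots,n\}$ and, for each $i\in\{1,\dots,n\}$, exactly two parallel edges $e_i^{(0)},e_i^{(1)}$ between vertices $i-1$ and $i$ (and no other edges). Let $\epsilon,\delta\ge0$ and $\alpha\ge0$, and let $\mathcal{A}$ be an algorithm that is $(\epsilon,\delta)$-differentially private on $\mathcal{G}$ and that on every input edge weights $w:\mathcal{E}\to\{0,1\}$ produces a path from $s=0$ to $t=n$ with expected approximation error at most $\alpha$. Then there exists a $(2\epsilon,(1+e^{\epsilon})\delta)$-differentially private algorithm $\mathcal{B}$ which on every input $x\in\{0,1\}^n$ produces $y\in\{0,1\}^n$ such that the expected Hamming distance $d_H(x,y)$ is at most $\alpha$.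
   Context: Private edge weight model: for a graph $\mathcal{G}=(\mathcal{V},\mathcal{E})$, a weight function is $w:\mathcal{E}\to\mathbb{R}^+$ (nonnegative reals). Two weight functions $w,w'$ are neighboring if $\sum_{e\in\mathcal{E}}|w(e)-w'(e)|\le 1$. A randomized algorithm $\mathcal{A}$ on weight functions is $(\epsilon,\delta)$-differentially private on $\mathcal{G}$ if for all neighboring $w,w'$ and all sets $S$ of outputs, $\Pr[\mathcal{A}(w)\in S]\le e^{\epsilon}\Pr[\mathcal{A}(w')\in S]+\delta$. The approximation error of a path $P$ from $s$ to $t$ is $w(P)-d_w(s,t)$, where $w(P)$ is the sum of the edge weights on $P$ and $d_w(s,t)$ is the minimum such weight over paths from $s$ to $t$. A randomized algorithm $\mathcal{B}$ with inputs in $\{0,1\}^n$ is $(\epsilon',\delta')$-differentially private if for all $x,x'\in\{0,1\}^n$ differing in exactly one coordinate and all sets $S$ of outputs, $\Pr[\mathcal{B}(x)\in S]\le e^{\epsilon'}\Pr[\mathcal{B}(x')\in S]+\delta'$. $d_H$ denotes Hamming distance. *)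

(* Defs.v *)
From HB Require Import structures.
From mathcomp Require Import all_boot all_order all_algebra.
From mathcomp Require Import all_classical reals sequences exp.
Set Implicit Arguments. Unset Strict Implicit. Unset Printing Implicit Defensive.
Import Order.TTheory GRing.Theory Num.Theory.
Local Open Scope ring_scope.
Local Open Scope classical_set_scope.

(* A randomized algorithm is modelled by its output distribution on each input.
   Outputs here range over a countable set (paths / bit strings) and every
   distribution on the relevant (finite) output sets is finitely supported. *)
Record dist (R : realType) (T : eqType) := Dist {
  dsupp : seq T;
  dmass : T -> R;
  dmass_ge0 : forall x, 0 <= dmass x;
  dsupp_uniq : uniq dsupp;
  dmass_out : forall x, x \notin dsupp -> dmass x = 0;
  dmass_sum1 : \sum_(x <- dsupp) dmass x = 1 }.

Definition Pr (R : realType) (T : eqType) (D : dist R T) (S : T -> Prop) : R :=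
  \sum_(x <- dsupp D | `[< S x >]) dmass D x.

Definition Expect (R : realType) (T : eqType) (D : dist R T) (f : T -> R) : R :=
  \sum_(x <- dsupp D) dmass D x * f x.

(* Vertices are 0..n (as nats). Edge (i, b) with i : 'I_n, b : bool is the edge
   e_{i+1}^{(b)} between vertices i and i+1. *)
Definition edge (n : nat) := ('I_n * bool)%type.

Definition connects (n : nat) (e : edge n) (u v : nat) : bool :=
  ((u == e.1) && (v == e.1.+1)) || ((u == e.1.+1) && (v == e.1)).

Definition is_path (n : nat) (s t : nat) (p : seq (edge n)) : Prop :=
  exists vs : seq nat,
    [/\ size vs = (size p).+1, nth 0%N vs 0 = s, nth 0%N vs (size p) = t,
        uniq vs &
        forall (k : nat) (e : edge n), nth None [seq Some x | x <- p] k = Some e ->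
          connects e (nth 0%N vs k) (nth 0%N vs k.+1)].

Definition pweight (R : realType) (n : nat) (w : edge n -> R) (p : seq (edge n)) : R :=
  \sum_(e <- p) w e.

Definition dist_w (R : realType) (n : nat) (w : edge n -> R) (s t : nat) : R :=
  inf [set pweight w p | p in [set p | is_path s t p]].

Definition nbr_weights (R : realType) (n : nat) (w w' : edge n -> R) : Prop :=
  \sum_(e : edge n) `|w e - w' e| <= 1.

Definition dp_graph (R : realType) (n : nat) (eps delta : R)
    (A : (edge n -> R) -> dist R (seq (edge n))) : Prop :=
  forall w w' : edge n -> R,
    (forall e, 0 <= w e) -> (forall e, 0 <= w' e) -> nbr_weights w w' ->
    forall S : seq (edge n) -> Prop,
      Pr (A w) S <= expR eps * Pr (A w') S + delta.

Definition bits (n : nat) := {ffun 'I_n -> bool}.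

Definition hamming (n : nat) (x y : bits n) : nat := #|[set i | x i != y i]|.

Definition dp_bits (R : realType) (n : nat) (eps delta : R) (T : eqType)
    (B : bits n -> dist R T) : Prop :=
  forall x x' : bits n, hamming x x' = 1%N ->
    forall S : T -> Prop, Pr (B x) S <= expR eps * Pr (B x') S + delta.

(* Main.v *)
Require Import Defs.
From HB Require Import structures.
From mathcomp Require Import all_boot all_order all_algebra.
From mathcomp Require Import all_classical reals sequences exp.
From mathcomp Require Import ring zify.
Import Order.TTheory GRing.Theory Num.Theory.
Local Open Scope ring_scope.
Set Implicit Arguments. Unset Strict Implicit.

Definition pmass (R : realType) (T : eqType) (U : finType) (D : dist R T)
  (f : T -> U) (y : U) : R :=
  \sum_(p <- dsupp D | f p == y) dmass D p.

Lemma pmass_key (R : realType) (T : eqType) (U : finType) (D : dist R T)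
  (f : T -> U) (g : U -> R) :
  \sum_(y <- enum U) pmass D f y * g y = \sum_(p <- dsupp D) dmass D p * g (f p).
Proof.
rewrite big_enum /=.
under eq_bigr do rewrite /pmass big_distrl /= big_mkcond /=.
rewrite exchange_big /=.
apply: eq_bigr => p _.
rewrite (bigD1 (f p)) //= eqxx big1 ?addr0 // => y /negbTE.
by rewrite eq_sym => ->.
Qed.

Lemma pmass_ge0 (R : realType) (T : eqType) (U : finType) (D : dist R T)
  (f : T -> U) y : 0 <= pmass D f y.
Proof. by apply: sumr_ge0 => p _; apply: dmass_ge0. Qed.

Lemma pmass_out (R : realType) (T : eqType) (U : finType) (D : dist R T)
  (f : T -> U) y : y \notin enum U -> pmass D f y = 0.
Proof. by rewrite mem_enum. Qed.

Lemma pmass_sum1 (R : realType) (T : eqType) (U : finType) (D : dist R T)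
  (f : T -> U) : \sum_(y <- enum U) pmass D f y = 1.
Proof.
have := pmass_key D f (fun _ => 1).
under eq_bigr do rewrite mulr1.
move=> ->; under eq_bigr do rewrite mulr1.
exact: dmass_sum1.
Qed.

Definition pushd (R : realType) (T : eqType) (U : finType) (D : dist R T)
  (f : T -> U) : dist R U :=
  @Dist R U (enum U) (pmass D f) (pmass_ge0 D f) (enum_uniq U)
    (@pmass_out R T U D f) (pmass_sum1 D f).

Lemma if_mul (R : realType) (b : bool) (x : R) :
  (if b then x else 0) = x * (b%:R).
Proof. by case: b; rewrite ?mulr1 ?mulr0. Qed.

Lemma Pr_pushd (R : realType) (T : eqType) (U : finType) (D : dist R T)
  (f : T -> U) (S : U -> Prop) :
  Pr (pushd D f) S = Pr D (fun p => S (f p)).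
Proof.
rewrite /Pr /= big_mkcond /=.
under eq_bigr do rewrite if_mul.
rewrite (pmass_key D f (fun y => (`[< S y >])%:R)).
by rewrite [RHS]big_mkcond /=; apply: eq_bigr => p _; rewrite if_mul.
Qed.

Lemma Expect_pushd (R : realType) (T : eqType) (U : finType) (D : dist R T)
  (f : T -> U) (g : U -> R) :
  Expect (pushd D f) g = Expect D (fun p => g (f p)).
Proof. exact: pmass_key. Qed.

Definition wx (R : realType) (n : nat) (x : bits n) (e : edge n) : R :=
  (e.2 != x e.1)%:R.

Definition wm (R : realType) (n : nat) (x : bits n) (i0 : 'I_n) (e : edge n) : R :=
  if e.1 == i0 then 0 else wx R x e.

Lemma sum_edge (R : realType) (n : nat) (G : edge n -> R) :
  \sum_(e : edge n) G e = \sum_(i : 'I_n) (G (i, true) + G (i, false)).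
Proof.
rewrite (eq_bigr (fun i => \sum_(b : bool) G (i, b))); last by move=> i _; rewrite big_bool.
rewrite (pair_bigA _ (fun i b => G (i, b))) /=.
by apply: eq_bigr => -[i b].
Qed.

Lemma nbr_wm (R : realType) (n : nat) (x : bits n) (i0 : 'I_n) :
  nbr_weights (wx R x) (wm R x i0).
Proof.
rewrite /nbr_weights sum_edge (bigD1 i0) //= big1 ?addr0.
  rewrite /wm /= eqxx /wx /= !subr0.
  by case: (x i0); rewrite /= ?normr0 ?normr1 ?addr0 ?add0r.
move=> i /negbTE hi; rewrite /wm /= hi !subrr normr0; exact: addr0.
Qed.

Lemma nbr_sym (R : realType) (n : nat) (w w' : edge n -> R) :
  nbr_weights w w' -> nbr_weights w' w.
Proof.
rewrite /nbr_weights => h; apply: le_trans h; rewrite le_eqVlt; apply/orP; left.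
by apply/eqP; apply: eq_bigr => e _; rewrite distrC.
Qed.

Lemma cover (n : nat) (p : seq (edge n)) :
  is_path 0%N n p -> forall i : 'I_n, exists b, (i, b) \in p.
Proof.
move=> [vs [Hs H0 Hn Hu Hc]] i.
have key : forall m, (m <= size p)%N -> (i < nth 0%N vs m)%N ->
    exists2 k, (k < m)%N & (nth 0%N vs k <= i < nth 0%N vs k.+1)%N.
  elim=> [|m IH] Hm Hi; first by rewrite H0 in Hi.
  case: (ltnP i (nth 0%N vs m)) => h.
    have [k k1 k2] := IH (ltnW Hm) h.
    by exists k => //; apply: leqW.
  by exists m => //; apply/andP; split.
have := key (size p) (leqnn _); rewrite Hn => /(_ (ltn_ord i)) [k Hk /andP[k1 k2]].
have := Hc k (nth (i, false) p k).
rewrite (nth_map (i, false)) // => /(_ erefl).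
have ep : nth (i, false) p k \in p by apply: mem_nth.
move: ep; set e := nth (i, false) p k => ep.
rewrite /connects => /orP[/andP[/eqP a /eqP b]|/andP[/eqP a /eqP b]].
- exists e.2.
  have -> : i = e.1 by apply: val_inj => /=; lia.
  by case: e ep {a b}.
- exfalso; lia.
Qed.

Definition fbits (n : nat) (p : seq (edge n)) : bits n := [ffun i => (i, true) \in p].

Lemma sum_undup (R : realType) (T : eqType) (s : seq T) (g : T -> R) :
  (forall e, 0 <= g e) -> \sum_(e <- undup s) g e <= \sum_(e <- s) g e.
Proof.
move=> g0; elim: s => [|a s IH] //=.
case: ifP => _.
  by rewrite big_cons; apply: le_trans IH _; rewrite lerDr.
by rewrite !big_cons lerD2l.
Qed.

Lemma ham_le (R : realType) (n : nat) (x : bits n) (p : seq (edge n)) :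
  is_path 0%N n p -> (hamming x (fbits p))%:R <= pweight (wx R x) p.
Proof.
move=> hp.
have w0 : forall e, 0 <= wx R x e by move=> e; rewrite /wx ler0n.
apply: le_trans (sum_undup p w0).
rewrite big_uniq ?undup_uniq // big_mkcond /= sum_edge.
rewrite /hamming -sum1_card natr_sum big_mkcond /=.
apply: ler_sum => i _; rewrite unfold_in /= asboolb /fbits ffunE /= !mem_undup /wx /=.
case hx: (x i); case hf: ((i, true) \in p) => /=.
- by rewrite add0r; case: ifP.
- have [b hb] := cover hp i.
  have -> : (i, false) \in p by case: b hb => //; rewrite hf.
  by rewrite add0r.
- by rewrite lerDl; case: ifP.
- by rewrite add0r; case: ifP.
Qed.

Lemma path0 (n : nat) (d : 'I_n) (x : bits n) :
  is_path 0%N n [seq (i, x i) | i <- enum 'I_n].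
Proof.
exists (iota 0 n.+1); split.
- by rewrite size_iota size_map size_enum_ord.
- by rewrite nth_iota.
- by rewrite size_map size_enum_ord nth_iota.
- exact: iota_uniq.
move=> k e; rewrite -map_comp.
case: (ltnP k n) => hk; last by rewrite nth_default // size_map size_enum_ord.
have hk' : (k < size (enum 'I_n))%N by rewrite size_enum_ord.
rewrite (nth_map d _ _ hk') => -[<-].
rewrite /connects !nth_iota // ?ltnS /= ?nth_enum_ord //; last by lia.
by rewrite !add0n !eqxx.
Qed.

Lemma dist_le0 (R : realType) (n : nat) (d : 'I_n) (x : bits n) :
  dist_w (wx R x) 0%N n <= 0.
Proof.
have w0 : forall e, 0 <= wx R x e by move=> e; rewrite /wx ler0n.
have hl : has_lbound [set pweight (wx R x) p | p in [set p | is_path 0%N n p]].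
  exists 0 => z [p _ <-]; rewrite /pweight; exact: sumr_ge0.
apply: (ge_inf hl); exists [seq (i, x i) | i <- enum 'I_n]; first exact: path0.
rewrite /pweight big_map big1 // => i _; by rewrite /wx /= eqxx.
Qed.

Unset Implicit Arguments.

Theorem lemma5p2 (R : realType) (n : nat) (eps delta alpha : R)
  (A : (edge n -> R) -> dist R (seq (edge n))) :
  (1 <= n)%N -> 0 <= eps -> 0 <= delta -> 0 <= alpha ->
  dp_graph eps delta A ->
  (forall w : edge n -> R, (forall e, w e = 0 \/ w e = 1) ->
     (forall p, p \in dsupp (A w) -> is_path 0%N n p) /\
     Expect (A w) (fun p => pweight w p - dist_w w 0%N n) <= alpha) ->
  exists B : bits n -> dist R (bits n),
    dp_bits (2 * eps) ((1 + expR eps) * delta) B /\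
    forall x : bits n, Expect (B x) (fun y => (hamming x y)%:R) <= alpha.
Proof.
move=> hn he hd ha Hdp Hacc.
have d : 'I_n := Ordinal hn.
have w01 : forall (x : bits n) (e : edge n), wx R x e = 0 \/ wx R x e = 1.
  by move=> x e; rewrite /wx; case: (e.2 != x e.1); [right|left].
have w0 : forall (x : bits n) (e : edge n), 0 <= wx R x e by move=> x e; rewrite /wx ler0n.
have wm0 : forall (x : bits n) (i : 'I_n) (e : edge n), 0 <= wm R x i e.
  by move=> x i e; rewrite /wm; case: ifP.
exists (fun x => pushd (A (wx R x)) (@fbits n)); split.
- move=> x x' hxx' S; rewrite !Pr_pushd.
  move: hxx'; rewrite /hamming => /eqP /card1P [i0 hi0].
  have agree : forall j, j != i0 -> x j = x' j.
    move=> j hj; apply/eqP; apply: contraNT hj => hne.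
    move: (hi0 j); rewrite unfold_in /= asboolb hne /= => /esym.
    by rewrite ?inE => ->.
  have em : wm R x i0 = wm R x' i0.
    apply: funext => e; rewrite /wm; case: eqP => // /eqP h.
    by rewrite /wx agree.
  set T := fun p => S (fbits p).
  have H1 := Hdp _ _ (w0 x) (wm0 x i0) (nbr_wm R x i0) T.
  have H2 := Hdp _ _ (wm0 x' i0) (w0 x') (nbr_sym (nbr_wm R x' i0)) T.
  rewrite em in H1.
  apply: (le_trans H1).
  have -> : 2 * eps = eps + eps by ring.
  rewrite expRD.
  have e0 : 0 <= expR eps := expR_ge0 eps.
  apply: le_trans (_ : expR eps * (expR eps * Pr (A (wx R x')) T + delta) + delta <= _).
    by rewrite lerD2r; apply: ler_wpM2l.
  by rewrite le_eqVlt; apply/orP; left; apply/eqP; ring.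
- move=> x; rewrite Expect_pushd.
  have [Hp He] := Hacc (wx R x) (w01 x).
  apply: le_trans He; rewrite /Expect !big_seq; apply: ler_sum => p hp.
  apply: ler_wpM2l; first exact: dmass_ge0.
  apply: (le_trans (ham_le R x (Hp p hp))).
  rewrite lerDl oppr_ge0; exact: (dist_le0 R d x).
Qed.
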